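(* Let $P$ be a Coxeter polygon in $\mathbb H^2$, let $S$ be the set of reflections in its sides, and let $\Gamma = \langle S\rangle$. Let $w \in \Gamma$, fix an expression of $w$ as a word of minimal length in the elements of $S$, and let $T \subset S$ be the set of elements occurring in this expression. Then for every $x \in P$ and every $s \in T$ we have $d(x, wx) \ge d(x, sx)$.
   Context: A Coxeter polygon is a finite-area region of $\mathbb H^2$ bounded by finitely many geodesics such that each angle between adjacent sides is of the form $\pi/m$ for an integer $m\ge 2$. *)

(* Defs.v *)
(* Model of H^2: the upper half-plane { (x,y) : y > 0 } in R*R. *)
From HB Require Import structures.
From mathcomp Require Import all_boot all_order all_algebra.
From mathcomp Require Import all_classical all_reals all_analysis.
Set Implicit Arguments. Unset Strict Implicit. Unset Printing Implicit Defensive.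
Import Order.TTheory GRing.Theory Num.Theory.
Local Open Scope ring_scope.

Section Hyp.
Variable R : realType.

Definition inH (p : R * R) : Prop := 0 < p.2.

(* hyperbolic distance: arcosh (1 + |p-q|^2 / (2 p.2 q.2)),
   with arcosh t = ln (t + sqrt (t^2 - 1)) *)
Definition hdist (p q : R * R) : R :=
  let t := 1 + ((p.1 - q.1) ^+ 2 + (p.2 - q.2) ^+ 2) / (2 * p.2 * q.2) in
  ln (t + Num.sqrt (t ^+ 2 - 1)).

(* A geodesic line is encoded by g = (a, b, c) with b^2 - 4ac > 0; it is the
   set { (x,y) in H^2 : a (x^2 + y^2) + b x + c = 0 }, i.e. a vertical line
   (a = 0) or a half-circle centred on the real axis (a <> 0).
   The closed half-plane bounded by it is { gfun g <= 0 }. *)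
Definition gfun (g : R * R * R) (p : R * R) : R :=
  g.1.1 * (p.1 ^+ 2 + p.2 ^+ 2) + g.1.2 * p.1 + g.2.

Definition is_geodesic (g : R * R * R) : Prop :=
  0 < g.1.2 ^+ 2 - 4 * g.1.1 * g.2.

Definition ggrad (g : R * R * R) (p : R * R) : R * R :=
  (2 * g.1.1 * p.1 + g.1.2, 2 * g.1.1 * p.2).

Definition refl (g : R * R * R) (p : R * R) : R * R :=
  let a := g.1.1 in let b := g.1.2 in let c := g.2 in
  if a == 0 then (- p.1 - 2 * c / b, p.2)
  else
    let h := - b / (2 * a) in
    let r2 := (b ^+ 2 - 4 * a * c) / (4 * a ^+ 2) in
    let n := (p.1 - h) ^+ 2 + p.2 ^+ 2 in
    (h + r2 * (p.1 - h) / n, r2 * p.2 / n).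

Definition polygon n (G : 'I_n -> R * R * R) : set (R * R) :=
  [set p | inH p /\ forall i, gfun (G i) p <= 0].

(* Euclidean angle between two nonzero vectors (the half-plane model is
   conformal, so hyperbolic angles are Euclidean angles) *)
Definition vangle (u v : R * R) : R :=
  acos ((u.1 * v.1 + u.2 * v.2) /
        (Num.sqrt (u.1 ^+ 2 + u.2 ^+ 2) * Num.sqrt (v.1 ^+ 2 + v.2 ^+ 2))).

(* interior angle at a corner p of the polygon between sides i and j:
   pi minus the angle between the outward normals *)
Definition interior_angle (gi gj : R * R * R) (p : R * R) : R :=
  pi - vangle (ggrad gi p) (ggrad gj p).

Definition harea (A : set (R * R)) : \bar R :=
  (\int[(@lebesgue_measure R \x @lebesgue_measure R)%E]_(p in A)
     ((p.2 ^+ 2)^-1)%:E)%E.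

Definition coxeter_polygon n (G : 'I_n -> R * R * R) : Prop :=
  let P := polygon G in
  [/\ (forall i, is_geodesic (G i)),
      (exists p, inH p /\ forall i, gfun (G i) p < 0),
      (* every bounding geodesic carries a genuine side (a nondegenerate
         segment of the boundary) *)
      (forall i, exists p q, p <> q /\ P p /\ P q /\
                    gfun (G i) p = 0 /\ gfun (G i) q = 0),
      (harea P < +oo)%E &
      (forall i j p, i != j -> P p -> gfun (G i) p = 0 -> gfun (G j) p = 0 ->
         exists2 m : nat, (2 <= m)%N & interior_angle (G i) (G j) p = pi / m%:R)].

(* the element of Gamma represented by a word in the generators:
   [:: i1; ...; ik] represents s_{i1} o ... o s_{ik} *)
Definition word_eval n (G : 'I_n -> R * R * R) (w : seq 'I_n) : R * R -> R * R :=
  foldr (fun i f => refl (G i) \o f) id w.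

Definition same_elt n (G : 'I_n -> R * R * R) (w w' : seq 'I_n) : Prop :=
  forall p, inH p -> word_eval G w p = word_eval G w' p.

Definition reduced_word n (G : 'I_n -> R * R * R) (w : seq 'I_n) : Prop :=
  forall w', same_elt G w w' -> (size w <= size w')%N.

End Hyp.

(* Main.v *)
Require Import Defs.
From HB Require Import structures.
From mathcomp Require Import all_boot all_order all_algebra.
From mathcomp Require Import all_classical all_reals all_analysis.
From mathcomp Require Import ring lra zify.
Set Implicit Arguments. Unset Strict Implicit. Unset Printing Implicit Defensive.
Import Order.TTheory GRing.Theory Num.Theory.
Local Open Scope ring_scope.

Section S.
Variable R : realType.
Implicit Types (u v g : R * R * R) (p : R * R).

Definition kB u v : R := u.1.2 * v.1.2 - 2 * (u.1.1 * v.2 + u.2 * v.1.1).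
Definition kadd u v : R * R * R := (u.1.1 + v.1.1, u.1.2 + v.1.2, u.2 + v.2).
Definition ksc (k : R) u : R * R * R := (k * u.1.1, k * u.1.2, k * u.2).
Definition krefl g v := kadd v (ksc (- (2 * kB v g / kB g g)) g).
Definition knu p : R * R * R :=
  (- (2 * p.2)^-1, p.1 / p.2, - ((p.1 ^+ 2 + p.2 ^+ 2) / (2 * p.2))).

Lemma kext u v : u.1.1 = v.1.1 -> u.1.2 = v.1.2 -> u.2 = v.2 -> u = v.
Proof. by case: u => [[a b] c]; case: v => [[a' b'] c'] /= -> -> ->. Qed.

Lemma gfun_nu g p : inH p -> gfun g p = p.2 * kB (knu p) g.
Proof.
rewrite /inH /gfun /kB /knu /= => hp.
field. by rewrite lt0r_neq0.
Qed.

Lemma refl_inH g p : is_geodesic g -> inH p -> inH (refl g p).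
Proof.
rewrite /is_geodesic /inH /refl.
case: g => [[a b] c] /= hg hp.
case: ifP => [/eqP a0|/negbT a0] /=; first by [].
have a2 : 0 < a ^+ 2 by rewrite exprn_even_gt0.
apply: divr_gt0; last first.
  by apply: ltr_wpDl; [exact: sqr_ge0| exact: exprn_gt0].
apply: mulr_gt0 => //; apply: divr_gt0 => //.
by rewrite pmulr_rgt0.
Qed.

Lemma refl_nu g p : is_geodesic g -> inH p -> knu (refl g p) = krefl g (knu p).
Proof.
rewrite /is_geodesic /inH /refl /krefl /knu /kB /kadd /ksc.
case: g => [[a b] c]; case: p => x y /= hg hp.
have hQ : b * b - 2 * (a * c + c * a) != 0.
  by apply: lt0r_neq0; move: hg; congr (0 < _); ring.
have y0 : y != 0 by rewrite lt0r_neq0.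
case: ifP => [/eqP a0|/negbT a0] /=.
  subst a.
  have b0 : b != 0 by apply/eqP => b0; move: hg; rewrite b0; lra.
  by apply: kext => /=; field; rewrite ?b0 ?y0.
have n0 : (x - - b / (2 * a)) ^+ 2 + y ^+ 2 != 0.
  apply: lt0r_neq0; apply: ltr_wpDl; [exact: sqr_ge0| exact: exprn_gt0].
have n1 : (x * (2 * a) - - b) ^+ 2 + y ^+ 2 * (4 * a ^+ 2) != 0.
  apply: lt0r_neq0; apply: ltr_wpDl; first exact: sqr_ge0.
  by apply: mulr_gt0; [exact: exprn_gt0| rewrite pmulr_rgt0 // exprn_even_gt0].
have q0 : b ^+ 2 - 4 * a * c != 0 by apply: lt0r_neq0.
by apply: kext => /=; field; rewrite hQ y0 a0 n1.
Qed.

Definition acoshF (t : R) : R := ln (t + Num.sqrt (t ^+ 2 - 1)).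

Lemma hdist_nu p q : inH p -> inH q -> hdist p q = acoshF (- kB (knu p) (knu q)).
Proof.
rewrite /inH /hdist /acoshF; case: p => x y; case: q => x' y' /= hy hy'.
suff -> : 1 + ((x - x') ^+ 2 + (y - y') ^+ 2) / (2 * y * y') =
   - kB (knu (x, y)) (knu (x', y')) by [].
rewrite /kB /knu /=; field.
by rewrite !lt0r_neq0.
Qed.

Lemma nuB_ge1 p q : inH p -> inH q -> 1 <= - kB (knu p) (knu q).
Proof.
rewrite /inH; case: p => x y; case: q => x' y' /= hy hy'.
have -> : - kB (knu (x, y)) (knu (x', y')) =
   1 + ((x - x') ^+ 2 + (y - y') ^+ 2) / (2 * y * y').
  by rewrite /kB /knu /=; field; rewrite !lt0r_neq0.
rewrite lerDl; apply: divr_ge0; first by apply: addr_ge0; exact: sqr_ge0.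
by rewrite !mulr_ge0 // ltW.
Qed.

Lemma nuB_eq1 p q : inH p -> inH q -> - kB (knu p) (knu q) = 1 -> p = q.
Proof.
rewrite /inH; case: p => x y; case: q => x' y' /= hy hy'.
have -> : - kB (knu (x, y)) (knu (x', y')) =
   1 + ((x - x') ^+ 2 + (y - y') ^+ 2) / (2 * y * y').
  by rewrite /kB /knu /=; field; rewrite !lt0r_neq0.
move=> h1.
have /eqP : ((x - x') ^+ 2 + (y - y') ^+ 2) / (2 * y * y') = 0 by lra.
rewrite mulf_eq0 invr_eq0.
have -> : (2 * y * y' == 0) = false.
  by apply/negbTE; rewrite !mulf_neq0 ?lt0r_neq0.
rewrite orbF paddr_eq0 ?sqr_ge0 // !sqrf_eq0 !subr_eq0 => /andP[/eqP -> /eqP ->].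
by [].
Qed.

Lemma nuBB p : inH p -> kB (knu p) (knu p) = -1.
Proof.
rewrite /inH /kB /knu; case: p => x y /= hy; field; by rewrite lt0r_neq0.
Qed.

Lemma nu_inj p q : inH p -> inH q -> knu p = knu q -> p = q.
Proof.
move=> hp hq e; apply: nuB_eq1 => //.
by rewrite e nuBB // opprK.
Qed.



Lemma vBC u v : kB u v = kB v u.
Proof. rewrite /kB; ring. Qed.
Lemma vBDr u v w : kB u (kadd v w) = kB u v + kB u w.
Proof. rewrite /kB /kadd /=; ring. Qed.
Lemma vBDl u v w : kB (kadd v w) u = kB v u + kB w u.
Proof. rewrite /kB /kadd /=; ring. Qed.
Lemma vBZr k u v : kB u (ksc k v) = k * kB u v.
Proof. rewrite /kB /ksc /=; ring. Qed.
Lemma vBZl k u v : kB (ksc k v) u = k * kB v u.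
Proof. rewrite /kB /ksc /=; ring. Qed.

Lemma vrefl_add g u v : krefl g (kadd u v) = kadd (krefl g u) (krefl g v).
Proof. rewrite /krefl /kadd /ksc /kB /=; apply: kext => /=; ring. Qed.
Lemma vrefl_sc g k u : krefl g (ksc k u) = ksc k (krefl g u).
Proof. rewrite /krefl /kadd /ksc /kB /=; apply: kext => /=; ring. Qed.
Lemma vrefl_iso g u v : kB g g != 0 -> kB (krefl g u) (krefl g v) = kB u v.
Proof. move=> h; rewrite /krefl /kadd /ksc; move: h; rewrite /kB /= => h; field; exact: h. Qed.
Lemma vrefl_invol g u : kB g g != 0 -> krefl g (krefl g u) = u.
Proof. move=> h; rewrite /krefl /kadd /ksc; move: h; rewrite /kB /= => h; apply: kext => /=; field; exact: h. Qed.
Lemma vrefl_self g : kB g g != 0 -> krefl g g = ksc (-1) g.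
Proof. move=> h; rewrite /krefl /kadd /ksc; move: h; rewrite /kB /= => h; apply: kext => /=; field; exact: h. Qed.

Definition kdet u v w : R :=
  u.1.1 * (v.1.2 * w.2 - v.2 * w.1.2) - u.1.2 * (v.1.1 * w.2 - v.2 * w.1.1)
  + u.2 * (v.1.1 * w.1.2 - v.1.2 * w.1.1).

Lemma det3_refl g u v w : kB g g != 0 ->
  kdet (krefl g u) (krefl g v) (krefl g w) = - kdet u v w.
Proof. move=> h; rewrite /kdet /krefl /kadd /ksc; move: h; rewrite /kB /= => h; field; exact: h. Qed.

End S.


Section W.
Variable R : realType.
Variable n : nat.
Variable G : 'I_n -> R * R * R.
Hypothesis HG : forall i, is_geodesic (G i).

Lemma Q_gt0 i : 0 < kB (G i) (G i).
Proof. by move: (HG i); rewrite /is_geodesic /kB; congr (0 < _); ring. Qed.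
Lemma Q_neq0 i : kB (G i) (G i) != 0.
Proof. by rewrite lt0r_neq0 // Q_gt0. Qed.

Definition Mw (w : seq 'I_n) : R * R * R -> R * R * R :=
  foldr (fun i (f : R * R * R -> R * R * R) => fun x => krefl (G i) (f x)) id w.

Lemma Mw_cat u v x : Mw (u ++ v) x = Mw u (Mw v x).
Proof. by elim: u => [|i u IH] //=; rewrite IH. Qed.

Lemma we_cat u v x : word_eval G (u ++ v) x = word_eval G u (word_eval G v x).
Proof. by elim: u => [|i u IH] //=; rewrite /= IH. Qed.

Lemma we_inH w p : inH p -> inH (word_eval G w p).
Proof. by elim: w => [|i w IH] //= hp; apply: refl_inH => //; apply: IH. Qed.

Lemma Mw_nu w p : inH p -> knu (word_eval G w p) = Mw w (knu p).
Proof.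
elim: w => [|i w IH] //= hp.
by rewrite refl_nu ?IH //; exact: we_inH.
Qed.

Lemma Mw_add w u v : Mw w (kadd u v) = kadd (Mw w u) (Mw w v).
Proof. by elim: w => [|i w IH] //=; rewrite IH vrefl_add. Qed.
Lemma Mw_sc w k u : Mw w (ksc k u) = ksc k (Mw w u).
Proof. by elim: w => [|i w IH] //=; rewrite IH vrefl_sc. Qed.
Lemma Mw_iso w u v : kB (Mw w u) (Mw w v) = kB u v.
Proof. by elim: w => [|i w IH] //=; rewrite vrefl_iso ?Q_neq0. Qed.

Lemma det3_Mw w u v x :
  kdet (Mw w u) (Mw w v) (Mw w x) = (-1) ^+ size w * kdet u v x.
Proof.
elim: w => [|i w IH] /=; first by rewrite mul1r.
by rewrite det3_refl ?Q_neq0 // IH exprS mulN1r mulNr.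
Qed.

Definition n1 : R * R * R := knu (0, 1).
Definition n2 : R * R * R := knu (1, 1).
Definition n3 : R * R * R := knu (-1, 1).

Lemma basis3 v : v = kadd (ksc (2 * v.2 - 4 * v.1.1) n1)
  (kadd (ksc ((v.1.2 + 2 * (v.1.1 - v.2)) / 2) n2)
        (ksc ((2 * (v.1.1 - v.2) - v.1.2) / 2) n3)).
Proof. by rewrite /n1 /n2 /n3 /knu /kadd /ksc; apply: kext => /=; field. Qed.

Lemma det3_n : kdet n1 n2 n3 != 0.
Proof.
have -> : kdet n1 n2 n3 = 1 / 2 by rewrite /kdet /n1 /n2 /n3 /knu /=; field.
by apply: lt0r_neq0; rewrite divr_gt0.
Qed.

Lemma inH1 : inH ((0 : R), (1 : R)). Proof. by rewrite /inH /=. Qed.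
Lemma inH2 : inH ((1 : R), (1 : R)). Proof. by rewrite /inH /=. Qed.
Lemma inH3 : inH ((-1 : R), (1 : R)). Proof. by rewrite /inH /=. Qed.

Lemma same_Mw w w' : same_elt G w w' -> forall v, Mw w v = Mw w' v.
Proof.
move=> h v; rewrite (basis3 v) !Mw_add !Mw_sc.
rewrite /n1 /n2 /n3 -(Mw_nu w inH1) -(Mw_nu w' inH1) -(Mw_nu w inH2) -(Mw_nu w' inH2).
rewrite -(Mw_nu w inH3) -(Mw_nu w' inH3).
by rewrite (h _ inH1) (h _ inH2) (h _ inH3).
Qed.

Lemma m1_neq1 : (-1 : R) != 1.
Proof. by apply/eqP; lra. Qed.

Lemma same_parity w w' : same_elt G w w' -> odd (size w) = odd (size w').
Proof.
move=> h.
have e : (-1) ^+ size w * kdet n1 n2 n3 = (-1) ^+ size w' * kdet n1 n2 n3 :> R.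
  by rewrite -!det3_Mw !(same_Mw h).
move/(mulIf det3_n): e.
rewrite -(signr_odd _ (size w)) -(signr_odd _ (size w')).
case: (odd (size w)); case: (odd (size w')) => //.
  by rewrite expr1 expr0 => /eqP; rewrite (negbTE m1_neq1).
by rewrite expr1 expr0 => /eqP; rewrite eq_sym (negbTE m1_neq1).
Qed.

End W.

Section Rd.
Variable R : realType.
Variable n : nat.
Variable G : 'I_n -> R * R * R.
Hypothesis HG : forall i, is_geodesic (G i).

Local Notation same := (same_elt G).
Local Notation red := (reduced_word G).

Lemma same_refl w : same w w. Proof. by []. Qed.
Lemma same_sym w w' : same w w' -> same w' w.
Proof. by move=> h p hp; rewrite h. Qed.
Lemma same_trans w1 w2 w3 : same w1 w2 -> same w2 w3 -> same w1 w3.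
Proof. by move=> h1 h2 p hp; rewrite h1 // h2. Qed.

Lemma same_cat x y p q : same x y -> same (p ++ x ++ q) (p ++ y ++ q).
Proof.
move=> h z hz; rewrite !we_cat; congr (word_eval G p _).
by rewrite h //; exact: we_inH.
Qed.

Lemma refl_invol i p : inH p -> refl (G i) (refl (G i) p) = p.
Proof.
move=> hp; apply: nu_inj => //; first by do 2 apply: refl_inH => //.
by rewrite !refl_nu //; [rewrite vrefl_invol // Q_neq0 | exact: refl_inH].
Qed.

Lemma same_ii i : same [:: i; i] [::].
Proof. by move=> p hp /=; exact: refl_invol. Qed.

Lemma red_prefix u v : red (u ++ v) -> red u.
Proof.
move=> h u' e; have := h (u' ++ v).
rewrite !size_cat leq_add2r; apply.
by have := same_cat [::] v e; rewrite /= ?cats0.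
Qed.

Lemma red_suffix u v : red (u ++ v) -> red v.
Proof.
move=> h v' e; have := h (u ++ v').
rewrite !size_cat leq_add2l; apply.
by have := same_cat u [::] e; rewrite ?cats0.
Qed.

Lemma red_same x y : red x -> same x y -> size x = size y -> red y.
Proof.
move=> hx e es y' e'; rewrite -es; apply: hx.
exact: same_trans e e'.
Qed.

Lemma red_nodup p i q : ~ red (p ++ [:: i; i] ++ q).
Proof.
move=> h.
have := h (p ++ [::] ++ q) (same_cat p q (same_ii i)).
by rewrite !size_cat /=; lia.
Qed.

Lemma red_nil : red [::]. Proof. by []. Qed.

End Rd.

Section V1.
Variable R : realType.
Implicit Types (u v w : R * R * R).

Definition kcross v w : R * R * R :=
  (v.1.2 * w.2 - v.2 * w.1.2, v.2 * w.1.1 - v.1.1 * w.2, v.1.1 * w.1.2 - v.1.2 * w.1.1).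

Definition gram3 (x1 x2 x3 : R * R * R) : R :=
  let B11 := kB x1 x1 in let B12 := kB x1 x2 in let B13 := kB x1 x3 in
  let B22 := kB x2 x2 in let B23 := kB x2 x3 in let B33 := kB x3 x3 in
  B11 * (B22 * B33 - B23 * B23) - B12 * (B12 * B33 - B23 * B13)
  + B13 * (B12 * B23 - B22 * B13).

Lemma gram_det (x1 x2 x3 : R * R * R) : gram3 x1 x2 x3 = -4 * kdet x1 x2 x3 ^+ 2.
Proof.
case: x1 => [[a1 b1] c1]; case: x2 => [[a2 b2] c2]; case: x3 => [[a3 b3] c3].
rewrite /gram3 /kdet /kB /=; ring.
Qed.

Lemma span0 w (x1 x2 x3 : R * R * R) : kdet x1 x2 x3 != 0 ->
  kB w x1 = 0 -> kB w x2 = 0 -> kB w x3 = 0 -> w = (0, 0, 0).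
Proof.
case: w => [[a b] c]; case: x1 => [[a1 b1] c1]; case: x2 => [[a2 b2] c2];
case: x3 => [[a3 b3] c3]; rewrite /kdet /kB /= => hd h1 h2 h3.
set D := (X in X != 0) in hd.
have ec : D * (-2 * c) = 0.
  have -> : D * (-2 * c) =
    (b * b1 - 2 * (a * c1 + c * a1)) * (b2 * c3 - c2 * b3)
  + (b * b2 - 2 * (a * c2 + c * a2)) * (b3 * c1 - c3 * b1)
  + (b * b3 - 2 * (a * c3 + c * a3)) * (b1 * c2 - c1 * b2) by rewrite /D; ring.
  by rewrite h1 h2 h3; ring.
have eb : D * b = 0.
  have -> : D * b =
    (b * b1 - 2 * (a * c1 + c * a1)) * (c2 * a3 - a2 * c3)
  + (b * b2 - 2 * (a * c2 + c * a2)) * (c3 * a1 - a3 * c1)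
  + (b * b3 - 2 * (a * c3 + c * a3)) * (c1 * a2 - a1 * c2) by rewrite /D; ring.
  by rewrite h1 h2 h3; ring.
have ea : D * (-2 * a) = 0.
  have -> : D * (-2 * a) =
    (b * b1 - 2 * (a * c1 + c * a1)) * (a2 * b3 - b2 * a3)
  + (b * b2 - 2 * (a * c2 + c * a2)) * (a3 * b1 - b3 * a1)
  + (b * b3 - 2 * (a * c3 + c * a3)) * (a1 * b2 - b1 * a2) by rewrite /D; ring.
  by rewrite h1 h2 h3; ring.
have hc : D * c = 0 by lra.
have ha : D * a = 0 by lra.
move/eqP: hc; move/eqP: ha; move/eqP: eb.
by rewrite !mulf_eq0 (negbTE hd) /= => /eqP -> /eqP -> /eqP ->.
Qed.

Lemma gram_span0 w (x1 x2 x3 : R * R * R) : gram3 x1 x2 x3 != 0 ->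
  kB w x1 = 0 -> kB w x2 = 0 -> kB w x3 = 0 -> w = (0, 0, 0).
Proof.
move=> hg; apply: span0; apply/eqP => h; move: hg.
by rewrite gram_det h expr0n /= mulr0 eqxx.
Qed.

Lemma kB0 u : kB (0, 0, 0) u = 0.
Proof. rewrite /kB /=; ring. Qed.


Lemma nu_surj u : kB u u < 0 -> u.1.1 < 0 ->
  exists2 p, inH p & u = ksc (Num.sqrt (- kB u u)) (knu p).
Proof.
case: u => [[a b] c] /= hq ha.
set l := Num.sqrt _.
have l0 : 0 < l by rewrite /l sqrtr_gt0; lra.
have l2 : l ^+ 2 = - kB (a, b, c) (a, b, c) by rewrite /l sqr_sqrtr //; lra.
move: l2; rewrite /kB /= => l2.
exists (- b / (2 * a), - l / (2 * a)).
  by rewrite /inH /= mulNr -mulrN -invrN; apply: divr_gt0 => //; lra.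
have a0 : a != 0 by rewrite ltr0_neq0.
have l0' : l != 0 by rewrite lt0r_neq0.
rewrite /ksc /knu /=; apply: kext => /=; first by field; rewrite ?a0 ?l0'.
  by field; rewrite ?a0 ?l0'.
have -> : l * - (((- b / (2 * a)) ^+ 2 + (- l / (2 * a)) ^+ 2) / (2 * (- l / (2 * a))))
   = (b ^+ 2 + l ^+ 2) / (4 * a) by field; rewrite ?a0 ?l0'.
by rewrite l2; field; rewrite ?a0 ?l0'.
Qed.


Definition qvec u v : R * R * R :=
  let w := kcross u v in (- w.2 / 2, w.1.2, - w.1.1 / 2).

Lemma qvec_orth1 u v : kB (qvec u v) u = 0.
Proof.
case: u => [[a1 b1] c1]; case: v => [[a2 b2] c2]; by rewrite /qvec /kcross /kB /=; field.
Qed.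
Lemma qvec_orth2 u v : kB (qvec u v) v = 0.
Proof.
case: u => [[a1 b1] c1]; case: v => [[a2 b2] c2]; by rewrite /qvec /kcross /kB /=; field.
Qed.
Lemma qvec_norm u v : 4 * kB (qvec u v) (qvec u v) = kB u v ^+ 2 - kB u u * kB v v.
Proof.
case: u => [[a1 b1] c1]; case: v => [[a2 b2] c2]; by rewrite /qvec /kcross /kB /=; field.
Qed.

Lemma kB_neg_a u : kB u u < 0 -> u.1.1 != 0.
Proof.
case: u => [[a b] c]; rewrite /kB /= => h; apply/eqP => a0; move: h; rewrite a0.
by rewrite mul0r add0r mulr0 mulr0 subr0 => h; have := sqr_ge0 b; rewrite expr2; lra.
Qed.

Lemma q_exists u v : kB u v ^+ 2 < kB u u * kB v v ->
  exists2 p, inH p & kB (knu p) u = 0 /\ kB (knu p) v = 0.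
Proof.
move=> h.
set q := qvec u v.
have hq : kB q q < 0 by have := qvec_norm u v; rewrite -/q; lra.
have hq' : kB (ksc (-1) q) (ksc (-1) q) < 0 by rewrite vBZl vBZr; lra.
have o1 : kB q u = 0 by exact: qvec_orth1.
have o2 : kB q v = 0 by exact: qvec_orth2.
have [ha|ha] : q.1.1 < 0 \/ 0 < q.1.1.
  by have := kB_neg_a hq; rewrite neq_lt => /orP[]; [left|right].
  have [p hp e] := nu_surj hq ha; exists p => //.
  set l := Num.sqrt _ in e.
  have l0 : 0 < l by rewrite /l sqrtr_gt0; lra.
  move: o1 o2; rewrite e !vBZl => /eqP; rewrite mulf_eq0 (gt_eqF l0) /= => /eqP ->.
  by move/eqP; rewrite mulf_eq0 (gt_eqF l0) /= => /eqP ->.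
have ha' : (ksc (-1) q).1.1 < 0 by rewrite /ksc /= mulN1r oppr_lt0.
have [p hp e] := nu_surj hq' ha'; exists p => //.
set l := Num.sqrt _ in e.
have l0 : 0 < l by rewrite /l sqrtr_gt0; lra.
have o1' : kB (ksc (-1) q) u = 0 by rewrite vBZl o1 mulr0.
have o2' : kB (ksc (-1) q) v = 0 by rewrite vBZl o2 mulr0.
move: o1' o2'; rewrite e !vBZl => /eqP; rewrite mulf_eq0 (gt_eqF l0) /= => /eqP ->.
by move/eqP; rewrite mulf_eq0 (gt_eqF l0) /= => /eqP ->.
Qed.

Lemma causal_sign (d : R * R * R) (p p' : R * R) : kB d d <= 0 -> d != (0, 0, 0) -> inH p -> inH p' ->
  0 < kB (knu p) d * kB (knu p') d.
Proof.
move=> hd dn hp hp'.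
suff key : forall q q' : R * R, inH q -> inH q' -> 0 < gfun d q * gfun d q'.
  have := key p p' hp hp'; rewrite !gfun_nu //.
  have y0 : 0 < p.2 * p'.2 by apply: mulr_gt0.
  have -> : p.2 * kB (knu p) d * (p'.2 * kB (knu p') d) =
     (p.2 * p'.2) * (kB (knu p) d * kB (knu p') d) by ring.
  by rewrite pmulr_rgt0.
move: hd dn; case: d => [[a b] c]; rewrite /kB /gfun /inH /= => hd dn.
have key2 : forall q : R * R, 0 < q.2 -> 0 < a * (a * (q.1 ^+ 2 + q.2 ^+ 2) + b * q.1 + c)
                              \/ (a = 0 /\ b = 0 /\ c != 0).
  move=> q hq.
  have [a0|a0] := eqVneq a 0.
    right; split => //.
    have b0 : b = 0 by move: hd; rewrite a0 !mul0r mulr0 add0r mulr0 subr0 => hb; nra.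
    split => //; apply/eqP => c0; move: dn; by rewrite a0 b0 c0 eqxx.
  left.
  have : 0 < a ^+ 2 * q.2 ^+ 2.
    by apply: mulr_gt0; rewrite exprn_even_gt0 // ?(gt_eqF hq).
  have := sqr_ge0 (2 * a * q.1 + b).
  nra.
move=> q q' hq hq'.
have [h1|[a0 [b0 c0]]] := key2 q hq; last first.
  rewrite a0 b0 !mul0r !add0r.
  by rewrite -expr2 exprn_even_gt0.
have [h2|[a0 _]] := key2 q' hq'; last by move: h1; rewrite a0 !mul0r ltxx.
have a2 : 0 < a ^+ 2.
  by rewrite exprn_even_gt0 //; apply/eqP => a0; move: h1; rewrite a0 mul0r ltxx.
have := mulr_gt0 h1 h2.
nra.
Qed.

End V1.


Section V2.
Variable R : realType.
Variable n : nat.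
Variable G : 'I_n -> R * R * R.
Hypothesis hC : coxeter_polygon G.

Lemma HG i : is_geodesic (G i).
Proof. by case: hC => h _ _ _ _; exact: h. Qed.

Definition sQ i : R := Num.sqrt (kB (G i) (G i)).
Lemma sQ_gt0 i : 0 < sQ i.
Proof. by rewrite /sQ sqrtr_gt0 Q_gt0 //; exact: HG. Qed.
Lemma sQ2 i : sQ i ^+ 2 = kB (G i) (G i).
Proof. by rewrite /sQ sqr_sqrtr // ltW // Q_gt0 //; exact: HG. Qed.

Definition alpha i : R * R * R := ksc (sQ i)^-1 (G i).

Lemma alphaQ i : kB (alpha i) (alpha i) = 1.
Proof.
rewrite /alpha vBZl vBZr -sQ2.
have := sQ_gt0 i => h; field; by rewrite gt_eqF.
Qed.

Lemma alphaB v i : kB v (alpha i) = (sQ i)^-1 * kB v (G i).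
Proof. by rewrite /alpha vBZr. Qed.

Lemma alphaBB i j : kB (alpha i) (alpha j) = (sQ i)^-1 * (sQ j)^-1 * kB (G i) (G j).
Proof. by rewrite /alpha vBZl vBZr mulrA. Qed.

Lemma gfun_alpha p i : inH p -> gfun (G i) p = p.2 * sQ i * kB (knu p) (alpha i).
Proof.
move=> hp; rewrite gfun_nu // alphaB.
have := sQ_gt0 i => h; field; by rewrite gt_eqF.
Qed.

Lemma sign_alpha p i : inH p -> (gfun (G i) p <= 0) = (kB (knu p) (alpha i) <= 0).
Proof.
move=> hp; rewrite gfun_alpha //.
by rewrite pmulr_rle0 // mulr_gt0 // sQ_gt0.
Qed.

Lemma zero_alpha p i : inH p -> (gfun (G i) p = 0) <-> (kB (knu p) (alpha i) = 0).
Proof.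
move=> hp; rewrite gfun_alpha //.
have h : p.2 * sQ i != 0 by rewrite gt_eqF // mulr_gt0 // sQ_gt0.
split; last by move=> ->; rewrite mulr0.
by move/eqP; rewrite mulf_eq0 (negbTE h) /= => /eqP.
Qed.

Lemma polyB p i : polygon G p -> kB (knu p) (alpha i) <= 0.
Proof. by case=> hp h; rewrite -sign_alpha. Qed.

Lemma polyI p : inH p -> (forall i, kB (knu p) (alpha i) <= 0) -> polygon G p.
Proof. by move=> hp h; split => // i; rewrite sign_alpha. Qed.

Lemma polyH p : polygon G p -> inH p.
Proof. by case. Qed.

Lemma grad_dot (g1 g2 : R * R * R) (p : R * R) : gfun g1 p = 0 -> gfun g2 p = 0 ->
  (ggrad g1 p).1 * (ggrad g2 p).1 + (ggrad g1 p).2 * (ggrad g2 p).2 = kB g1 g2.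
Proof.
case: g1 => [[a1 b1] c1]; case: g2 => [[a2 b2] c2]; case: p => x y.
rewrite /gfun /ggrad /kB /= => h1 h2.
have e1 : a1 * (x ^+ 2 + y ^+ 2) = - b1 * x - c1 by lra.
have e2 : a2 * (x ^+ 2 + y ^+ 2) = - b2 * x - c2 by lra.
have -> : (2 * a1 * x + b1) * (2 * a2 * x + b2) + 2 * a1 * y * (2 * a2 * y) =
  2 * a1 * (a2 * (x ^+ 2 + y ^+ 2)) + 2 * a2 * (a1 * (x ^+ 2 + y ^+ 2))
  + 2 * a1 * x * b2 + 2 * a2 * x * b1 + b1 * b2 by ring.
rewrite e1 e2; ring.
Qed.

Lemma adjB i j p : i != j -> polygon G p -> gfun (G i) p = 0 -> gfun (G j) p = 0 ->
  exists2 m : nat, (2 <= m)%N & kB (alpha i) (alpha j) = - cos (pi / m%:R).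
Proof.
move=> ij hP hi hj.
case: hC => _ _ _ _ hang.
have [m hm ha] := hang i j p ij hP hi hj.
exists m => //.
move: ha; rewrite /interior_angle /vangle.
rewrite (grad_dot hi hi) (grad_dot hj hj) (grad_dot hi hj).
rewrite -/(sQ i) -/(sQ j).
have -> : kB (G i) (G j) / (sQ i * sQ j) = kB (alpha i) (alpha j).
  by rewrite alphaBB; field; rewrite !gt_eqF ?sQ_gt0.
have cs : kB (G i) (G j) ^+ 2 <= kB (G i) (G i) * kB (G j) (G j).
  rewrite -(grad_dot hi hi) -(grad_dot hj hj) -(grad_dot hi hj).
  set u := ggrad (G i) p; set v := ggrad (G j) p.
  have := sqr_ge0 (u.1 * v.2 - u.2 * v.1); nra.
have hD1 : kB (alpha i) (alpha j) ^+ 2 <= 1.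
  rewrite alphaBB -!sQ2 in cs *.
  have hi0 := sQ_gt0 i; have hj0 := sQ_gt0 j.
  have -> : ((sQ i)^-1 * (sQ j)^-1 * kB (G i) (G j)) ^+ 2 =
     kB (G i) (G j) ^+ 2 / (sQ i ^+ 2 * sQ j ^+ 2) by field; rewrite !gt_eqF.
  rewrite ler_pdivrMr ?mul1r //.
  by apply: mulr_gt0; apply: exprn_gt0.
set D := kB (alpha i) (alpha j) in hD1 *.
have hmem : D \in `[(-1), 1].
  by rewrite in_itv /=; apply/andP; split; nra.
move=> h.
have e : acos D = pi - pi / m%:R by lra.
by rewrite -(acosK hmem) e cosB cospi sinpi; ring.
Qed.

End V2.


Lemma exmax (R : realType) n (f : 'I_n -> R) (P : pred 'I_n) r0 :
  P r0 -> exists2 r, P r & forall k, P k -> f k <= f r.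
Proof.
move=> h; case: (@arg_maxP _ _ _ r0 P f h) => r Pr hr.
by exists r.
Qed.

Lemma cos_pim (R : realType) (m : nat) : (2 <= m)%N ->
  [/\ (0 : R) <= cos (pi / m%:R), cos (pi / m%:R) < (1 : R) & (0 : R) < sin (pi / m%:R)].
Proof.
move=> hm.
have m0 : (0 : R) < m%:R by rewrite ltr0n; lia.
have m2 : (2 : R) <= m%:R by rewrite (ler_nat R 2 m).
have p0 := @pi_gt0 R.
have h1 : (0 : R) < pi / m%:R by exact: divr_gt0 p0 m0.
have h2 : pi / m%:R <= pi / 2 :> R.
  by rewrite ler_pdivrMr // mulrC mulrA ler_pdivlMr //; nra.
have hs : 0 < sin (pi / m%:R :> R) by apply: sin_gt0_pi; apply/andP; split => //; lra.
have hc : 0 <= cos (pi / m%:R :> R) by apply: cos_ge0_pihalf; apply/andP; split; lra.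
split => //.
have := cos2Dsin2 (pi / m%:R : R); nra.
Qed.

Section V3.
Variable R : realType.
Variable n : nat.
Variable G : 'I_n -> R * R * R.
Hypothesis hC : coxeter_polygon G.

Local Notation alpha := (alpha G).
Local Notation P := (polygon G).

Lemma adj_range i j p : i != j -> P p -> gfun (G i) p = 0 -> gfun (G j) p = 0 ->
  -1 < kB (alpha i) (alpha j) <= 0.
Proof.
move=> ij hp hi hj; have [m hm ->] := adjB hC ij hp hi hj.
have [h1 h2 _] := cos_pim R hm.
by apply/andP; split; lra.
Qed.

Lemma sideP i : exists p q, p <> q /\ P p /\ P q /\ gfun (G i) p = 0 /\ gfun (G i) q = 0.
Proof. by case: hC => _ _ h _ _; exact: h. Qed.

Lemma incidence i k p1 p2 pq : p1 <> p2 -> inH p1 -> inH p2 -> inH pq ->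
  kB (knu p1) (alpha i) = 0 -> kB (knu p2) (alpha i) = 0 -> kB (knu pq) (alpha i) = 0 ->
  kB (knu p1) (alpha k) = 0 -> kB (knu p2) (alpha k) = 0 -> kB (knu pq) (alpha k) = 0.
Proof.
move=> p12 h1 h2 hq e1 e2 eq f1 f2.
set x1 := knu p1 in e1 f1 *; set x2 := knu p2 in e2 f2 *; set Q0 := knu pq in eq *.
set d := kB x1 x2.
have hd : d < -1.
  have := nuB_ge1 h1 h2; rewrite -/x1 -/x2 -/d => hd.
  rewrite lt_neqAle; apply/andP; split; last by lra.
  apply/eqP => hd'; apply: p12; apply: nuB_eq1 => //; rewrite -/x1 -/x2 -/d hd'; ring.
set c1 := kB Q0 x1; set c2 := kB Q0 x2.
set mu := (c2 + c1 * d) / (d ^+ 2 - 1).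
set la := mu * d - c1.
set w := kadd Q0 (kadd (ksc (- la) x1) (ksc (- mu) x2)).
have x11 : kB x1 x1 = -1 by apply: nuBB.
have x22 : kB x2 x2 = -1 by apply: nuBB.
have dd : d ^+ 2 - 1 != 0 by apply: lt0r_neq0; nra.
have w1 : kB w x1 = 0.
  rewrite /w !vBDl !vBZl x11 (vBC x2 x1) -/d -/c1 /la /mu; field; exact: dd.
have w2 : kB w x2 = 0.
  rewrite /w !vBDl !vBZl x22 -/d -/c2 /la /mu; field; exact: dd.
have w3 : kB w (alpha i) = 0 by rewrite /w !vBDl !vBZl e1 e2 eq; ring.
have g0 : gram3 x1 x2 (alpha i) != 0.
  rewrite /gram3 x11 x22 -/d e1 e2 (alphaQ hC).
  by apply: ltr0_neq0; nra.

have w0 := gram_span0 g0 w1 w2 w3.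
have : kB w (alpha k) = 0 by rewrite w0 kB0.
by rewrite /w !vBDl !vBZl f1 f2; lra.
Qed.

Lemma endpoint i pq r0 : inH pq -> kB (knu pq) (alpha i) = 0 -> 0 < kB (knu pq) (alpha r0) ->
  exists e r, [/\ P e, kB (knu e) (alpha i) = 0, kB (knu e) (alpha r) = 0
                & 0 < kB (knu pq) (alpha r)].
Proof.
move=> hq qi qr0.
have [p1 [p2 [p12 [h1 [h2 [z1 z2]]]]]] := sideP i.
have hp1 := polyH h1; have hp2 := polyH h2.
move/(zero_alpha hC i hp1): z1 => z1; move/(zero_alpha hC i hp2): z2 => z2.
set Q0 := knu pq in qi qr0 *.
set x1 := knu p1 in z1 *; set x2 := knu p2 in z2 *.
set y := kadd x1 x2.
pose a k := kB Q0 (alpha k).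
pose b k := kB y (alpha k).
have ble : forall k, b k <= 0.
  move=> k; rewrite /b /y vBDl.
  have := polyB hC k h1; have := polyB hC k h2; rewrite -/x1 -/x2; lra.
have bneg : forall k, 0 < a k -> b k < 0.
  move=> k ak; rewrite lt_neqAle ble andbT; apply/eqP => bk.
  have e1 : kB x1 (alpha k) = 0.
    move: bk; rewrite /b /y vBDl.
    have := polyB hC k h1; have := polyB hC k h2; rewrite -/x1 -/x2; lra.
  have e2 : kB x2 (alpha k) = 0.
    move: bk; rewrite /b /y vBDl.
    have := polyB hC k h1; have := polyB hC k h2; rewrite -/x1 -/x2; lra.
  have := incidence p12 hp1 hp2 hq z1 z2 qi e1 e2.
  by rewrite -/Q0 -/(a k) => h; move: ak; rewrite h ltxx.
have [r br rmax] := @exmax _ _ (fun k => - a k / b k) (fun k => b k < 0) r0 (bneg r0 qr0).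
set L := - a r / b r.
have L0 : 0 < L.
  apply: lt_le_trans (rmax r0 (bneg r0 qr0)).
  have := bneg r0 qr0 => h; rewrite /= mulNr -mulrN -invrN.
  by apply: divr_gt0; [exact: qr0 | rewrite oppr_gt0].
set z := kadd Q0 (ksc L y).
have BQ0 : kB Q0 Q0 = -1 by apply: nuBB.
have Bq1 : kB Q0 x1 <= -1 by have := nuB_ge1 hq hp1; rewrite -/Q0 -/x1; lra.
have Bq2 : kB Q0 x2 <= -1 by have := nuB_ge1 hq hp2; rewrite -/Q0 -/x2; lra.
have B12 : kB x1 x2 <= -1 by have := nuB_ge1 hp1 hp2; rewrite -/x1 -/x2; lra.
have B11 : kB x1 x1 = -1 by apply: nuBB.
have B22 : kB x2 x2 = -1 by apply: nuBB.
have zz : kB z z < 0.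
  rewrite /z /y !(vBDl, vBDr, vBZl, vBZr) BQ0 B11 B22 (vBC x2 x1) (vBC x1 Q0) (vBC x2 Q0).
  nra.
have za : z.1.1 < 0.
  rewrite /z /y /kadd /ksc /Q0 /x1 /x2 /knu /=.
  move: hq hp1 hp2; rewrite /inH => hq hp1 hp2.
  have t1 : 0 < (2 * pq.2)^-1 by rewrite invr_gt0; lra.
  have t2 : 0 < (2 * p1.2)^-1 by rewrite invr_gt0; lra.
  have t3 : 0 < (2 * p2.2)^-1 by rewrite invr_gt0; lra.
  nra.
have [e he ze] := nu_surj zz za.
set la := Num.sqrt _ in ze.
have la0 : 0 < la by rewrite /la sqrtr_gt0; lra.
have eB : forall k, kB (knu e) (alpha k) = (a k + L * b k) / la.
  move=> k; rewrite /a /b.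
  have -> : kB Q0 (alpha k) + L * kB y (alpha k) = kB z (alpha k)
    by rewrite /z vBDl vBZl.
  rewrite ze vBZl; field; by rewrite gt_eqF.
have ar : 0 < a r.
  have : a r = - L * b r by rewrite /L; field; exact: ltr0_neq0 br.
  by move=> ->; rewrite mulNr -mulrN; apply: mulr_gt0 => //; rewrite oppr_gt0.
exists e, r; split => //.
- apply: polyI hC _ he _ => k; rewrite eB; apply: mulr_le0_ge0 => //; last first.
    by rewrite invr_ge0 ltW.
  have [bk|bk] := ltrP (b k) 0.
    have := rmax k bk; rewrite -/L => hk.
    have : - a k / b k * b k >= L * b k by rewrite ler_wnM2r // ltW.
    rewrite divfK ?ltr0_neq0 //; lra.
  have bk0 : b k = 0 by have := ble k; lra.
  have : a k <= 0.
    by rewrite leNgt; apply/negP => ak; have := bneg k ak; lra.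
  by rewrite bk0 mulr0 addr0.
- by rewrite eB /a /b qi /y vBDl z1 z2 addr0 mulr0 addr0 mul0r.
- rewrite eB /L; apply/eqP; rewrite mulf_eq0; apply/orP; left; apply/eqP.
  by field; rewrite ltr0_neq0.
Qed.

Lemma corner i r e pq : i != r -> P e -> kB (knu e) (alpha i) = 0 ->
  kB (knu e) (alpha r) = 0 -> inH pq -> kB (knu pq) (alpha i) = 0 ->
  0 < kB (knu pq) (alpha r) -> forall f, P f ->
  kB (knu pq) (knu f) + kB (knu pq) (knu e) * kB (knu e) (knu f) <= 0.
Proof.
move=> ir hPe ei er hq qi qr f hf.
have he := polyH hPe; have hf' := polyH hf.
have /andP[rho1 rho0] : -1 < kB (alpha i) (alpha r) <= 0.
  apply: (adj_range ir hPe); by apply/(zero_alpha hC _ he).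
set rho := kB (alpha i) (alpha r) in rho1 rho0.
set E := knu e in ei er *; set Q0 := knu pq in qi qr *; set F := knu f.
set ar := kB Q0 (alpha r) in qr.
have r2 : 1 - rho ^+ 2 != 0 by apply: lt0r_neq0; nra.
set tau := ar / (1 - rho ^+ 2).
have tau0 : 0 < tau by rewrite /tau divr_gt0 //; nra.
set sig := - rho * tau.
have sig0 : 0 <= sig by rewrite /sig mulNr oppr_ge0; nra.
set u := kadd Q0 (ksc (kB Q0 E) E).
set w := kadd u (kadd (ksc (- sig) (alpha i)) (ksc (- tau) (alpha r))).
have EE : kB E E = -1 by apply: nuBB.
have ri : kB (alpha r) (alpha i) = rho by rewrite vBC.
have wE : kB w E = 0.
  rewrite /w /u !vBDl (vBZl (- sig)) (vBZl (- tau)) (vBZl (kB Q0 E)).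
  rewrite EE (vBC (alpha i) E) (vBC (alpha r) E) ei er; ring.
have wi : kB w (alpha i) = 0.
  rewrite /w /u !vBDl (vBZl (- sig)) (vBZl (- tau)) (vBZl (kB Q0 E)).
  rewrite ei qi (alphaQ hC) ri /sig; ring.
have wr : kB w (alpha r) = 0.
  rewrite /w /u !vBDl (vBZl (- sig)) (vBZl (- tau)) (vBZl (kB Q0 E)).
  rewrite er -/ar (alphaQ hC) -/rho /sig /tau; field; exact: r2.
have g0 : gram3 E (alpha i) (alpha r) != 0.
  rewrite /gram3 EE ei er (alphaQ hC) (alphaQ hC) -/rho.
  by apply: ltr0_neq0; nra.
have w0 := gram_span0 g0 wE wi wr.
have : kB w F = 0 by rewrite w0 kB0.
rewrite /w /u !vBDl (vBZl (- sig)) (vBZl (- tau)) (vBZl (kB Q0 E)) => h.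
have fi : kB (alpha i) F <= 0 by have := polyB hC i hf; rewrite vBC.
have fr : kB (alpha r) F <= 0 by have := polyB hC r hf; rewrite vBC.
nra.
Qed.

Lemma vinberg i j : i != j -> kB (alpha i) (alpha j) <= -1 \/
  exists p, P p /\ gfun (G i) p = 0 /\ gfun (G j) p = 0.
Proof.
move=> ij.
case: (pselect (exists p, P p /\ gfun (G i) p = 0 /\ gfun (G j) p = 0)) => [h|nh].
  by right.
left; rewrite leNgt; apply/negP => hc.
set c := kB (alpha i) (alpha j) in hc.
have [p1 [p2 [p12 [h1 [h2 [z1 z2]]]]]] := sideP i.
have [x1 [x2 [_ [g1 [_ [y1 _]]]]]] := sideP j.
have hp1 := polyH h1; have hx1 := polyH g1.
move/(zero_alpha hC i hp1): z1 => z1; move/(zero_alpha hC j hx1): y1 => y1.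
have [c1|c1] := lerP 1 c.
  set d := kadd (alpha i) (ksc (-1) (alpha j)).
  have dd : kB d d <= 0.
    rewrite /d !vBDl !vBDr !(vBZl (-1)) !(vBZr (-1)) !(alphaQ hC) (vBC (alpha j) (alpha i)) -/c; lra.
  have [d0|d0] := eqVneq d (0, 0, 0).
    apply: nh; exists p1; split => //; split; first by apply/(zero_alpha hC i hp1).
    apply/(zero_alpha hC j hp1).
    have : kB (knu p1) d = 0 by rewrite d0 vBC kB0.
    by rewrite /d vBDr (vBZr (-1)) z1; lra.
  have := causal_sign dd d0 hp1 hx1.
  rewrite /d !vBDr !(vBZr (-1)) z1 y1.
  have := polyB hC j h1; have := polyB hC i g1; nra.
have cc : kB (alpha i) (alpha j) ^+ 2 < kB (alpha i) (alpha i) * kB (alpha j) (alpha j).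
  by rewrite !(alphaQ hC) -/c; nra.
have [pq hq [qi qj]] := q_exists cc.
have [r0 hr0] : exists r0, 0 < kB (knu pq) (alpha r0).
  case: (pselect (exists r0, 0 < kB (knu pq) (alpha r0))) => [//|hn].
  exfalso; apply: nh; exists pq; split.
    apply: (polyI hC hq) => k; rewrite leNgt; apply/negP => hk; apply: hn; by exists k.
  by split; [apply/(zero_alpha hC i hq) | apply/(zero_alpha hC j hq)].
have [e [r [hPe ei er qr]]] := endpoint hq qi hr0.
have [f [r' [hPf fj fr qr']]] := endpoint hq qj hr0.
have ir : i != r by apply/eqP => eir; move: qr; rewrite -eir qi ltxx.
have jr : j != r' by apply/eqP => ejr; move: qr'; rewrite -ejr qj ltxx.
have i1 := corner ir hPe ei er hq qi qr hPf.
have i2 := corner jr hPf fj fr hq qj qr' hPe.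
have he := polyH hPe; have hf := polyH hPf.
have A1 := nuB_ge1 he hf; have b1 := nuB_ge1 hq he; have C1 := nuB_ge1 hq hf.
rewrite (vBC (knu f) (knu e)) in i2.
have A2 : - kB (knu e) (knu f) <= 1 by nra.
have ef : e = f by apply: nuB_eq1 => //; lra.
apply: nh; exists e; split => //; split; first by apply/(zero_alpha hC i he).
by apply/(zero_alpha hC j he); rewrite ef.
Qed.

Lemma negB i j : i != j -> kB (alpha i) (alpha j) <= 0.
Proof.
move=> ij; case: (vinberg ij) => [h|[p [hp [hi hj]]]]; first by lra.
by have /andP[_ ->] := adj_range ij hp hi hj.
Qed.

End V3.


Fixpoint U2 (R : realType) (g : R) (k : nat) : R * R :=
  match k with 0 => (0, 1) | k.+1 => let ab := U2 g k in (ab.2, g * ab.2 - ab.1) end.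
Definition Useq (R : realType) (g : R) k := (U2 g k).1.

Lemma Useq0 (R : realType) (g : R) : Useq g 0 = 0. Proof. by []. Qed.
Lemma Useq1 (R : realType) (g : R) : Useq g 1 = 1. Proof. by []. Qed.
Lemma UseqS (R : realType) (g : R) k : Useq g k.+2 = g * Useq g k.+1 - Useq g k.
Proof. by []. Qed.

Lemma Useq_ge2 (R : realType) (g : R) : 2 <= g -> forall k, 0 <= Useq g k <= Useq g k.+1.
Proof.
move=> hg; elim => [|k IH]; first by rewrite Useq0 Useq1 lexx ler01.
move/andP: IH => [h1 h2]; apply/andP; split; first by lra.
rewrite UseqS; nra.
Qed.

Lemma Useq_sin (R : realType) (th : R) : 0 < sin th ->
  forall k, Useq (2 * cos th) k = sin (k%:R * th) / sin th.
Proof.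
move=> hs.
suff : forall k, Useq (2 * cos th) k = sin (k%:R * th) / sin th /\
                 Useq (2 * cos th) k.+1 = sin (k.+1%:R * th) / sin th by move=> h k; case: (h k).
elim => [|k [IH1 IH2]].
  by rewrite Useq0 Useq1 mul0r sin0 mul0r mul1r divff // gt_eqF.
split => //.
rewrite UseqS IH1 IH2.
have e1 : k.+2%:R * th = k.+1%:R * th + th by rewrite -[k.+2]addn1 natrD mulrDl mul1r.
have e2 : k%:R * th = k.+1%:R * th - th by rewrite -[k.+1]addn1 natrD mulrDl mul1r addrK.
have e3 : sin (k%:R * th) = sin (k.+1%:R * th) * cos th - cos (k.+1%:R * th) * sin th.
  by rewrite e2 sinB.
rewrite e1 sinD e3.
field; by rewrite gt_eqF.
Qed.

Section D.
Variable R : realType.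
Variable n : nat.
Variable G : 'I_n -> R * R * R.
Hypothesis hC : coxeter_polygon G.

Local Notation alpha := (alpha G).
Local Notation P := (polygon G).
Local Notation red := (reduced_word G).
Local Notation same := (same_elt G).
Local Notation Mw := (Mw G).

Lemma krefl_alpha r v : krefl (G r) v = kadd v (ksc (- (2 * kB v (alpha r))) (alpha r)).
Proof.
rewrite alphaB /alpha /krefl -(sQ2 hC r).
have h := sQ_gt0 hC r.
rewrite /kadd /ksc; apply: kext => /=; field; by rewrite gt_eqF.
Qed.

Lemma conj_same a s y : Mw a (alpha s) = alpha y -> same (a ++ [:: s]) (y :: a).
Proof.
move=> e p hp.
apply: nu_inj; first exact: we_inH (HG hC) _ _ hp.
  exact: we_inH (HG hC) _ _ hp.
rewrite !(Mw_nu (HG hC)) // Mw_cat /= krefl_alpha Mw_add Mw_sc e krefl_alpha.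
by rewrite -e (Mw_iso (HG hC)).
Qed.

Definition oth s t (x : 'I_n) := if x == s then t else s.

Lemma red_cons_head r a s : red (r :: a ++ [:: s]) -> r != head s a.
Proof.
move=> h; apply/eqP => e.
case: a e h => [|x a'] /= e h.
  by move: h; rewrite e; apply: (@red_nodup _ _ G (HG hC) [::] s [::]).
by move: h; rewrite e; apply: (@red_nodup _ _ G (HG hC) [::] x (a' ++ [:: s])).
Qed.

Section Pair.
Variables s t : 'I_n.
Hypothesis st : s != t.
Local Notation c := (kB (alpha s) (alpha t)).
Local Notation g := (- 2 * c).

Lemma oth_mem x : x \in [:: s; t] -> oth s t x \in [:: s; t].
Proof. by rewrite /oth; case: eqP; rewrite !inE eqxx ?orbT. Qed.

Lemma invar a : all (mem [:: s; t]) a -> red (a ++ [:: s]) ->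
  Mw a (alpha s) = kadd (ksc (Useq g (size a).+1) (alpha (head s a)))
                        (ksc (Useq g (size a)) (alpha (oth s t (head s a)))).
Proof.
elim: a => [|r a IH] /=.
  move=> _ _; rewrite /oth eqxx Useq1 Useq0.
  by rewrite /kadd /ksc; apply: kext => /=; ring.
move=> /andP[hr ha] hred.
have hred' : red (a ++ [:: s]) by exact: (@red_suffix _ _ G (HG hC) [:: r] _ hred).
rewrite IH //.
have rh := red_cons_head hred.
have hh : head s a \in [:: s; t].
  by case: (a) ha => [|x a'] /=; [rewrite inE eqxx | case/andP].
set h := head s a in rh hh *.
have ro : r = oth s t h.
  move: hr hh rh; rewrite /oth !inE.
  case/orP => /eqP ->; case/orP => /eqP ->;
    by rewrite ?eqxx ?(eq_sym t s) ?(negbTE st).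
have oh : oth s t r = h.
  rewrite ro /oth; case: (eqVneq h s) => [->|hs]; first by rewrite eq_sym (negbTE st).
  by rewrite eqxx; move: hh; rewrite !inE (negbTE hs) /= => /eqP.
have chr : kB (alpha h) (alpha r) = c.
  rewrite ro /oth; case: (eqVneq h s) => [->|hs]; first by [].
  move: hh; rewrite !inE (negbTE hs) /= => /eqP ->; exact: vBC.
rewrite oh -ro.
rewrite krefl_alpha.
rewrite vBDl (vBZl (Useq g (size a).+1)) (vBZl (Useq g (size a))) chr (alphaQ hC).
rewrite /kadd /ksc; apply: kext => /=; rewrite UseqS; ring.
Qed.

Lemma two_elt x h : x \in [:: s; t] -> h \in [:: s; t] -> x != h -> x = oth s t h.
Proof.
rewrite /oth !inE.
case/orP => /eqP ->; case/orP => /eqP ->;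
  by rewrite ?eqxx ?(eq_sym t s) ?(negbTE st).
Qed.

Lemma Ubound a : all (mem [:: s; t]) a -> red (a ++ [:: s]) ->
  0 <= Useq g (size a).+1 /\ 0 <= Useq g (size a).
Proof.
move=> ha hred.
case: (vinberg hC st) => [hc | [p [hp [hs ht]]]].
  have hg : 2 <= g by lra.
  have /andP[h1 h2] := Useq_ge2 hg (size a).
  by split => //; lra.
have [m hm cm] := adjB hC st hp hs ht.
have [c0 c1 s0] := cos_pim R hm.
set th := pi / m%:R in c0 c1 s0 cm.
have eg : g = 2 * cos th by rewrite cm; ring.
have m0 : (0 : R) < m%:R by rewrite ltr0n; lia.
have U k : (k <= m)%N -> 0 <= Useq g k.
  move=> km; rewrite eg Useq_sin //; apply: divr_ge0; last exact: ltW.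
  apply: sin_ge0_pi; apply/andP; split.
    by apply: mulr_ge0; [exact: ler0n | rewrite /th divr_ge0 // ltW // pi_gt0].
  rewrite /th mulrA ler_pdivrMr // mulrC ler_wpM2l ?ler_nat //.
  exact: ltW (pi_gt0 R).
suff sm : (size a < m)%N by split; apply: U; lia.
rewrite ltnNge; apply/negP => ms.
set k := (size a - m.-1)%N.
have ea : a = take k a ++ drop k a by rewrite cat_take_drop.
set pre := take k a in ea; set a' := drop k a in ea.
have sa' : size a' = m.-1 by rewrite /a' size_drop /k; lia.
have spre : size pre = k by rewrite /pre size_take; case: ltnP => //; lia.
have hall : all (mem [:: s; t]) pre && all (mem [:: s; t]) a' by rewrite -all_cat -ea.
move/andP: hall => [hpre ha'].
have hred' : red (a' ++ [:: s]).
  by apply: (@red_suffix _ _ G (HG hC) pre); rewrite catA -ea.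
have Um : Useq g m = 0.
  rewrite eg Useq_sin //.
  have -> : m%:R * th = pi by rewrite /th; field; rewrite gt_eqF.
  by rewrite sinpi mul0r.
have Um1 : Useq g m.-1 = 1.
  rewrite eg Useq_sin //.
  have em : (m%:R : R) = m.-1%:R + 1 by rewrite natr1 prednK //; lia.
  have -> : m.-1%:R * th = pi - th.
    rewrite /th em; field; by rewrite -em gt_eqF.
  by rewrite sinB sinpi cospi mul0r sub0r mulN1r opprK divff // gt_eqF.
have iv := invar ha' hred'.
have e1 : Useq g (size a').+1 = 0 by rewrite sa' prednK //; lia.
have e2 : Useq g (size a') = 1 by rewrite sa'.
rewrite e1 e2 in iv.
have iv' : Mw a' (alpha s) = alpha (oth s t (head s a')).
  by rewrite iv /kadd /ksc; apply: kext => /=; ring.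
have cj := conj_same iv'.
have [pre' [x epre]] : exists pre' x, pre = rcons pre' x.
  have : pre != [::] by rewrite -size_eq0 spre; lia.
  by case/lastP: (pre) => [|p' y] //; exists p', y.
have hx : x \in [:: s; t].
  by move: hpre; rewrite epre all_rcons => /andP[].
have hh' : head s a' \in [:: s; t].
  by case: (a') ha' => [|y a''] /=; [rewrite inE eqxx | case/andP].
have hred2 : red (x :: a' ++ [:: s]).
  apply: (@red_suffix _ _ G (HG hC) pre'); move: hred.
  by rewrite ea epre -cats1 -!catA.
have xo := two_elt hx hh' (red_cons_head hred2).
have E1 : a ++ [:: s] = rcons pre' x ++ (a' ++ [:: s]) ++ [::].
  by rewrite cats0 ea epre catA.
have E2 : rcons pre' x ++ (oth s t (head s a') :: a') ++ [::] = pre' ++ [:: x; x] ++ a'.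
  by rewrite cats0 -xo -cats1 -catA.
have S1 : same (a ++ [:: s]) (pre' ++ [:: x; x] ++ a').
  by rewrite E1 -E2; exact: (same_cat (HG hC)).
have S2 := same_cat (HG hC) pre' a' (same_ii (HG hC) x).
have := hred _ (same_trans S1 S2).
rewrite !size_cat /= ea size_cat epre size_rcons; lia.
Qed.

Lemma dihedral a : all (mem [:: s; t]) a -> red (a ++ [:: s]) ->
  exists A B, [/\ 0 <= A, 0 <= B &
     Mw a (alpha s) = kadd (ksc A (alpha s)) (ksc B (alpha t))].
Proof.
move=> ha hred.
have iv := invar ha hred.
have [u1 u0] := Ubound ha hred.
have hh : head s a \in [:: s; t].
  by case: (a) ha => [|y a'] /=; [rewrite inE eqxx | case/andP].
move: iv; rewrite /oth; move: hh; rewrite !inE => /orP[] /eqP ->.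
  by rewrite eqxx => ->; exists (Useq g (size a).+1), (Useq g (size a)).
rewrite eq_sym (negbTE st) => ->.
exists (Useq g (size a)), (Useq g (size a).+1); split => //.
by rewrite /kadd /ksc; apply: kext => /=; ring.
Qed.

End Pair.
End D.


Lemma ex_min_prop (Q : nat -> Prop) n0 : Q n0 ->
  exists N, Q N /\ forall M, Q M -> (N <= M)%N.
Proof.
move=> h.
have ex : exists N, `[< Q N >] by exists n0; exact/asboolP.
case: (ex_minnP ex) => N /asboolP QN hmin.
by exists N; split => // M /asboolP /hmin.
Qed.

Section Tm.
Variable R : realType.
Variable n : nat.
Variable G : 'I_n -> R * R * R.
Hypothesis hC : coxeter_polygon G.

Local Notation alpha := (alpha G).
Local Notation P := (polygon G).
Local Notation red := (reduced_word G).
Local Notation same := (same_elt G).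
Local Notation Mw := (Mw G).

Definition pos (v : R * R * R) := forall p, P p -> kB (knu p) v <= 0.

Lemma pos_comb A B v w : 0 <= A -> 0 <= B -> pos v -> pos w ->
  pos (kadd (ksc A v) (ksc B w)).
Proof.
move=> hA hB hv hw p hp; rewrite vBDr !vBZr.
have := hv p hp; have := hw p hp; nra.
Qed.

Lemma not_red w : ~ red w -> exists w', same w w' /\ (size w' < size w)%N.
Proof.
move=> h; case: (pselect (exists w', same w w' /\ (size w' < size w)%N)) => // hn.
exfalso; apply: h => w' e; rewrite leqNgt; apply/negP => hlt; apply: hn; by exists w'.
Qed.

Lemma Tthm k : forall w s, (size w <= k)%N -> red (w ++ [:: s]) -> pos (Mw w (alpha s)).
Proof.
elim: k => [|k IH] w s.
  by rewrite leqn0 size_eq0 => /eqP -> _ p hp; have := polyB hC s hp.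
case/lastP: w => [|w' t] hsz hred.
  by move=> p hp; have := polyB hC s hp.
have hGw := HG hC.
have ts : t != s.
  apply/eqP => e; move: hred; rewrite e -cats1 -catA /=.
  exact: (@red_nodup _ _ G hGw w' s [::]).
have st : s != t by rewrite eq_sym.
have hredw : red (rcons w' t) by exact: (red_prefix hGw hred).
pose Q N := exists v a, [/\ all (mem [:: s; t]) a, same (v ++ a) (rcons w' t),
                         (size v + size a = size (rcons w' t))%N & size v = N].
have Q0 : Q (size w').
  exists w', [:: t]; split.
  - by rewrite /= !inE eqxx orbT.
  - by rewrite cats1.
  - by rewrite size_rcons addn1.
  - by [].
have [N [[v [a [ha hva hsz' hN]]] hmin]] := ex_min_prop Q0.
have vlt : (size v <= size w')%N by rewrite hN; apply: hmin.
have red_va : red (v ++ a ++ [:: s]).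
  apply: (red_same hred).
    have := same_cat hGw [::] [:: s] (same_sym hva); by rewrite /= catA.
  by rewrite !size_cat /= -hsz' addnA.
have shift : forall y, y \in [:: s; t] -> red (v ++ [:: y]).
  move=> y hy; case: (pselect (red (v ++ [:: y]))) => // hn; exfalso.
  have [v' [e hlt]] := not_red hn.
  have hpar := same_parity hGw e.
  rewrite size_cat /= addn1 in hlt hpar.
  have hlt' : (size v' < size v)%N.
    rewrite ltnS leq_eqVlt in hlt; case/orP: hlt => [/eqP hv|//].
    by move: hpar; rewrite hv /= => /negP; case: (odd _).
  have e2 : same (v' ++ y :: a) (rcons w' t).
    have s1 := same_cat hGw [::] (y :: a) (same_sym e).
    rewrite /= in s1.
    have s2 := same_cat hGw v a (same_ii hGw y).
    apply: same_trans s1 _; rewrite -catA /=.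
    by apply: same_trans s2 _; rewrite /=.
  have qv' : Q (size v').
    exists v', (y :: a); split.
    - by rewrite /= hy ha.
    - exact: e2.
    - have := hredw _ (same_sym e2); rewrite size_cat /= -hsz' => h.
      by apply/eqP; rewrite eqn_leq h andbT addnS -addSn leq_add2r.
    - by [].
  by have := hmin _ qv'; rewrite -hN; lia.
have hvs := shift s (mem_head _ _).
have hvt : red (v ++ [:: t]) by apply: shift; rewrite !inE eqxx orbT.
have hk : (size v <= k)%N by rewrite size_rcons ltnS in hsz; exact: leq_trans vlt hsz.
have pvs := IH v s hk hvs.
have pvt := IH v t hk hvt.
have hra : red (a ++ [:: s]) by exact: (red_suffix hGw red_va).
have [A [B [hA hB eA]]] := dihedral hC st ha hra.
rewrite -(same_Mw hGw hva) Mw_cat eA Mw_add (Mw_sc G v A) (Mw_sc G v B).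
exact: pos_comb.
Qed.

End Tm.


Lemma acoshF_mono (R : realType) (t1 t2 : R) : 1 <= t1 -> t1 <= t2 -> acoshF t1 <= acoshF t2.
Proof.
move=> h1 h12; rewrite /acoshF.
have s1 := sqrtr_ge0 (t1 ^+ 2 - 1); have s2 := sqrtr_ge0 (t2 ^+ 2 - 1).
rewrite ler_ln ?posrE; [|lra|lra].
apply: lerD => //; apply: ler_wsqrtr; apply: lerB => //.
by rewrite ler_sqr ?nnegrE; lra.
Qed.

Section Fin.
Variable R : realType.
Variable n : nat.
Variable G : 'I_n -> R * R * R.
Hypothesis hC : coxeter_polygon G.

Local Notation alpha := (alpha G).
Local Notation P := (polygon G).
Local Notation red := (reduced_word G).
Local Notation Mw := (Mw G).

Lemma Mw_rcons u r v : Mw (rcons u r) v =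
  kadd (Mw u v) (ksc (- (2 * kB v (alpha r))) (Mw u (alpha r))).
Proof.
by rewrite -cats1 Mw_cat /= (krefl_alpha hC) Mw_add (Mw_sc G u).
Qed.

Lemma Hlem u s : red u -> s \notin u -> pos G (kadd (Mw u (alpha s)) (ksc (-1) (alpha s))).
Proof.
elim/last_ind: u => [|u r IH] hred hs p hp.
  by rewrite /= vBDr vBZr; lra.
have hGw := HG hC.
have hu : red u by apply: (red_prefix hGw (v := [:: r])); rewrite cats1.
move: hs; rewrite mem_rcons inE negb_or => /andP[sr su].
have := IH hu su p hp.
rewrite Mw_rcons !vBDr !(vBZr (-1)) vBZr.
have hT : pos G (Mw u (alpha r)) by apply: (Tthm hC (leqnn (size u))); rewrite cats1.
have := hT p hp.
have := negB hC sr.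
nra.
Qed.

Lemma Fmain w s x : red w -> s \in w -> P x ->
  1 + 2 * kB (knu x) (alpha s) ^+ 2 <= - kB (knu x) (Mw w (knu x)).
Proof.
elim/last_ind: w => [|u r IH] hred hs hx; first by rewrite in_nil in hs.
have hGw := HG hC.
have hxH := polyH hx.
have hu : red u by apply: (red_prefix hGw (v := [:: r])); rewrite cats1.
have hT : pos G (Mw u (alpha r)) by apply: (Tthm hC (leqnn (size u))); rewrite cats1.
have t1 := hT x hx.
have t2 := polyB hC r hx.
rewrite Mw_rcons vBDr vBZr.
case: (boolP (s \in u)) => su.
  have := IH hu su hx; nra.
have er : s = r by move: hs; rewrite mem_rcons inE (negbTE su) orbF => /eqP.
subst r.
have h1 : 1 <= - kB (knu x) (Mw u (knu x)).
  rewrite -(Mw_nu hGw) //; exact: nuB_ge1 (we_inH hGw _ hxH).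
have h2 := Hlem hu su hx.
rewrite vBDr vBZr in h2.
nra.
Qed.

End Fin.

Theorem lemma9 (R : realType) (n : nat) (G : 'I_n -> R * R * R)
  (w : seq 'I_n) :
  coxeter_polygon G -> reduced_word G w ->
  forall (x : R * R) (s : 'I_n), polygon G x -> s \in w ->
    hdist x (refl (G s) x) <= hdist x (word_eval G w x).
Proof.
move=> hC hred x s hx hs.
have hGw := HG hC.
have hxH := polyH hx.
have i1 : inH (word_eval G w x) by apply: (we_inH hGw).
have i2 : inH (refl (G s) x) by apply: (refl_inH (hGw s) hxH).
rewrite !hdist_nu //.
rewrite refl_nu // (Mw_nu hGw) //.
have e : - kB (knu x) (krefl (G s) (knu x)) = 1 + 2 * kB (knu x) (alpha G s) ^+ 2.
  rewrite (krefl_alpha hC) vBDr vBZr nuBB //; ring.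
apply: acoshF_mono; first by rewrite e; have := sqr_ge0 (kB (knu x) (alpha G s)); lra.
by rewrite e; exact: Fmain.
Qed.
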